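(* Let $q$ be a prime with $q\equiv 1 \pmod 3$, let $k=\frac{2q-2}{3}$, let $p_1<\dots<p_k$ be primes with $2q+10<p_1$, and let $n=6q\prod_{j=1}^k p_j$. Then $g(n)\ge 2q+8$ and $X_n$ contains a dominating cycle with $2q+6$ vertices; in particular $\gamma_t(X_n)\le\gamma_c(X_n)\le 2q+6\le g(n)-2$.
   Context: For a positive integer $n$, $X_n$ is the graph on $\{0,\dots,n-1\}$ with $a,b$ adjacent iff $\gcd(a-b,n)=1$. The Jacobsthal function $g(n)$ is the least positive integer $m$ such that every set of $m$ consecutive integers contains an integer coprime to $n$. A dominating cycle is a cycle whose vertex set is dominating (every vertex lies in the set or is adjacent to a vertex of it); $\gamma_c(G)$ is the minimum number of vertices of a dominating cycle. The total domination number $\gamma_t(G)$ is the minimum size of a set $S$ such that every vertex of $G$ is adjacent to some vertex of $S$. *)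

(* Defs.v *)
From HB Require Import structures.
From mathcomp Require Import all_boot all_order all_algebra.
From Stdlib Require Import ClassicalEpsilon.
Set Implicit Arguments. Unset Strict Implicit. Unset Printing Implicit Defensive.
Import Order.TTheory GRing.Theory Num.Theory.

(* Least natural number satisfying a Prop predicate (0 if none exists). *)
Definition Pbool (P : Prop) : bool :=
  if excluded_middle_informative P then true else false.

Definition least (P : nat -> Prop) : nat :=
  match excluded_middle_informative (exists m, P m) with
  | left H => @ex_minn (fun m => Pbool (P m))
                (let: ex_intro m Hm := H in
                 ex_intro _ m (match excluded_middle_informative (P m) as b
                       return (if b then true else false) = true with
                       | left _ => erefl | right NH => False_ind _ (NH Hm) end))
  | right _ => 0
  end.

Definition jac_window (n m : nat) : Prop :=
  forall a : int, exists2 i : nat, (i < m)%N & coprimez (a + i%:Z) n%:Z.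

Definition jacobsthal (n : nat) : nat :=
  least (fun m => (0 < m)%N /\ jac_window n m).

Definition Xadj (n : nat) : rel 'I_n :=
  fun a b => coprimez (a%:Z - b%:Z) n%:Z.

Definition is_graph_cycle (T : finType) (e : rel T) (s : seq T) : Prop :=
  (3 <= size s)%N /\ uniq s /\ cycle e s.

Definition dominating (T : finType) (e : rel T) (s : seq T) : Prop :=
  forall v : T, v \in s \/ exists2 u, u \in s & e v u.

Definition total_dominating (T : finType) (e : rel T) (S : {set T}) : Prop :=
  forall v : T, exists2 u, u \in S & e v u.

Definition dominating_cycle (T : finType) (e : rel T) (s : seq T) : Prop :=
  is_graph_cycle e s /\ dominating e s.

Definition gamma_c (T : finType) (e : rel T) : nat :=
  least (fun m => exists s : seq T, dominating_cycle e s /\ size s = m).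

Definition gamma_t (T : finType) (e : rel T) : nat :=
  least (fun m => exists S : {set T}, total_dominating e S /\ #|S| = m).

(* Main.v *)
Require Import Defs.
From HB Require Import structures.
From mathcomp Require Import all_boot all_order all_algebra.
From mathcomp Require Import zify.
From Stdlib Require Import ClassicalEpsilon.
Import Order.TTheory GRing.Theory Num.Theory.

Lemma Xadj_nat (n a b : nat) : (a < n)%N -> (b < n)%N ->
  coprimez ((Posz a) - (Posz b))%R (Posz n) = coprime (a + n - b) n.
Proof.
move=> an bn; rewrite coprimezE /=.
case: (leqP b a) => ba.
  have -> : ((Posz a) - (Posz b))%R = Posz (a - b)%N by rewrite subzn.
  rewrite /= -addnBAC //.
  by rewrite /coprime gcdnC (gcdnC _ n) addnC gcdnDl.
have -> : ((Posz a) - (Posz b))%R = (- Posz (b - a)%N)%R.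
  by rewrite -opprB subzn // ltnW.
rewrite abszN /=.
have -> : (a + n - b = n - (b - a))%N by lia.
set d := (b - a)%N.
have dn : (d <= n)%N by rewrite /d; lia.
rewrite /coprime.
have E1 : gcdn d n = gcdn d (n - d).
  by have := gcdnDl d (n - d); rewrite subnKC.
have E2 : gcdn (n - d) n = gcdn (n - d) d.
  by have := gcdnDl (n - d) d; rewrite subnK.
by rewrite E1 E2 gcdnC.
Qed.

Lemma PboolE (P : Prop) : Pbool P = true <-> P.
Proof. rewrite /Pbool; case: excluded_middle_informative => //. Qed.

Lemma least_spec (P : nat -> Prop) : (exists m, P m) ->
  P (least P) /\ forall m, P m -> (least P <= m)%N.
Proof.
move=> ex; rewrite /least; case: excluded_middle_informative => [H|//].
case: ex_minnP => m /PboolE Pm Hmin; split => // k Pk; apply: Hmin; exact/PboolE.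
Qed.

Lemma least_le (P : nat -> Prop) m : P m -> (least P <= m)%N.
Proof. move=> Pm; have [_ ] := @least_spec P (ex_intro P m Pm); exact. Qed.

Lemma window_n n : (0 < n)%N -> jac_window n n.
Proof.
move=> hn a.
set r := ((1 - a) %% Posz n)%Z.
have r0 : (0 <= r)%R by apply: modz_ge0; rewrite eqz_nat -lt0n.
have rn : (r < Posz n)%R by apply: ltz_pmod.
have hr : Posz `|r|%N = r by rewrite gez0_abs.
exists `|r|%N.
  by rewrite -ltz_nat hr.
rewrite hr /coprimez -gcdz_modl modzDmr (addrC a) subrK gcdz_modl.
by rewrite gcd1z.
Qed.

Lemma jac_lb n L : (0 < n)%N -> (exists x, forall i, (i < L)%N -> ~~ coprime (x + i) n) ->
  (L < jacobsthal n)%N.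
Proof.
move=> hn [x hx].
have [[m0 hw] _] := @least_spec (fun m => (0 < m)%N /\ jac_window n m)
   (ex_intro _ n (conj hn (@window_n n hn))).
rewrite /jacobsthal.
have [i hi hc] := hw (Posz x).
rewrite -PoszD coprimezE /= in hc.
case: (leqP L i) => h; first exact: leq_ltn_trans h hi.
by have := hx i h; rewrite hc.
Qed.

Definition sv (e f x : nat) := (x %% 2 != e) && (x %% 3 != f).

Lemma count_block6 e f k : e < 2 -> f < 3 -> k %% 6 = 0 -> count (sv e f) (iota k 6) = 2.
Proof.
move=> he hf hk; rewrite /= /sv.
have h0 : k %% 2 = 0 by lia. have h0' : k %% 3 = 0 by lia.
have h1 : k.+1 %% 2 = 1 by lia. have h1' : k.+1 %% 3 = 1 by lia.
have h2 : k.+2 %% 2 = 0 by lia. have h2' : k.+2 %% 3 = 2 by lia.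
have h3 : k.+3 %% 2 = 1 by lia. have h3' : k.+3 %% 3 = 0 by lia.
have h4 : k.+4 %% 2 = 0 by lia. have h4' : k.+4 %% 3 = 1 by lia.
have h5 : k.+4.+1 %% 2 = 1 by lia. have h5' : k.+4.+1 %% 3 = 2 by lia.
rewrite h0 h0' h1 h1' h2 h2' h3 h3' h4 h4' h5 h5'.
by case: e he => [|[|//]] _; case: f hf => [|[|[|//]]] _.
Qed.

Lemma count_block e f m : e < 2 -> f < 3 -> count (sv e f) (iota 0 (6 * m)) = 2 * m.
Proof.
move=> he hf; elim: m => [|m IH] //.
rewrite (_ : 6 * m.+1 = 6 * m + 6); last by lia.
rewrite iotaD count_cat IH add0n count_block6 //; first by lia.
by rewrite modnMr.
Qed.

Lemma count_split (T : eqType) (a b : pred T) s :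
  count a s = count (fun x => a x && b x) s + count (fun x => a x && ~~ b x) s.
Proof. elim: s => //= x s ->; case: (a x); case: (b x) => /=; lia. Qed.

Lemma sv_mod e f x y : x %% 6 = y %% 6 -> sv e f x = sv e f y.
Proof.
move=> h; rewrite /sv.
have -> : x %% 2 = y %% 2 by lia.
have -> : x %% 3 = y %% 3 by lia.
done.
Qed.

Lemma fin_check e f r (b2 b3 : bool) : e < 2 -> f < 3 -> r < 6 ->
  (b2 -> r < 4) -> (b3 -> (r == 0) && b2) ->
  sv e f r + sv e f (r + 1) + (b2 && sv e f (r + 2)) + (b3 && sv e f (r + 3))
  <= 1 + sv e f 2 + sv e f 3.
Proof.
move=> he hf hr; case: e he => [|[|//]] _; case: f hf => [|[|[|//]]] _;
case: r hr => [|[|[|[|[|[|//]]]]]] _; case: b2; case: b3 => //= h1 h2;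
try (by have := h1 isT); try (by have := h2 isT).
Qed.

Definition Lc (u : nat) := iota 0 (12 * u + 6) ++ [:: 12 * u + 8; 12 * u + 9].

Lemma Lc_uniq u : uniq (Lc u).
Proof.
rewrite /Lc cat_uniq iota_uniq /= !mem_iota !inE /=.
apply/and3P; split.
- apply/negP => /orP []; lia.
- apply/negP; lia.
- done.
Qed.

Lemma mem_Lc u x : (x \in Lc u) = (x < 12 * u + 6) || (x == 12 * u + 8) || (x == 12 * u + 9).
Proof. by rewrite /Lc mem_cat mem_iota !inE add0n orbA. Qed.

Lemma sv_shift e f u c m : sv e f (c + m * (6 * u + 1)) = sv e f (c %% 6 + m).
Proof. apply: sv_mod; lia. Qed.

Lemma sv_far e f u : sv e f (12 * u + 8) = sv e f 2 /\ sv e f (12 * u + 9) = sv e f 3.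
Proof. by split; apply: sv_mod; lia. Qed.

Lemma mem_small u c m : c < 6 * u + 1 -> m < 2 -> c + m * (6 * u + 1) \in Lc u.
Proof. move=> hc hm; rewrite mem_Lc; apply/orP; left; apply/orP; left; nia. Qed.

Lemma mem2 u c : c < 6 * u + 1 -> (c + 2 * (6 * u + 1) \in Lc u) -> c %% 6 < 4.
Proof. by move=> hc; rewrite mem_Lc => /orP [/orP [|/eqP]|/eqP]; lia. Qed.

Lemma mem3 u c : 1 <= u -> c < 6 * u + 1 -> (c + 3 * (6 * u + 1) \in Lc u) ->
  (c %% 6 == 0) && (c + 2 * (6 * u + 1) \in Lc u).
Proof.
move=> hu hc; rewrite !mem_Lc => /orP [/orP [|/eqP]|/eqP] h; lia.
Qed.

Lemma dec4 u c x : 1 <= u -> x %% (6 * u + 1) = c -> (x \in Lc u) ->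
  x \in [:: c; c + 1 * (6 * u + 1); c + 2 * (6 * u + 1); c + 3 * (6 * u + 1)].
Proof.
move=> hu hm hx.
have hxb : x < 4 * (6 * u + 1) by move: hx; rewrite mem_Lc; move=> /orP [/orP [|/eqP ->]|/eqP ->]; lia.
have hd : x %/ (6 * u + 1) < 4 by rewrite ltn_divLR // addn1.
have hx' := divn_eq x (6 * u + 1); rewrite hm in hx'.
move: hd hx'; case: (x %/ (6 * u + 1)) => [|[|[|[|//]]]] _ ->; rewrite !inE; lia.
Qed.

Lemma count_main u e f c : 1 <= u -> e < 2 -> f < 3 -> c < 6 * u + 1 ->
  4 * u + 1 <= count (fun s => sv e f s && (s %% (6 * u + 1) != c)) (Lc u).
Proof.
move=> hu he hf hc.
have A : count (sv e f) (Lc u) = 4 * u + 2 + (sv e f (12 * u + 8) + sv e f (12 * u + 9)).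
  rewrite /Lc count_cat (_ : 12 * u + 6 = 6 * (2 * u + 1)); last by lia.
  rewrite count_block //= addn0 mulnDr muln1 mulnA.
  by rewrite addnA.
have S := @count_split nat (sv e f) (fun s => s %% (6 * u + 1) == c) (Lc u).
have K : count (fun s => sv e f s && (s %% (6 * u + 1) == c)) (Lc u)
         <= 1 + sv e f (12 * u + 8) + sv e f (12 * u + 9).
  rewrite -size_filter.
  set L4 := [seq x <- [:: c; c + 1 * (6 * u + 1); c + 2 * (6 * u + 1); c + 3 * (6 * u + 1)]
               | sv e f x && (x \in Lc u)].
  have le1 : size [seq x <- Lc u | sv e f x && (x %% (6 * u + 1) == c)] <= size L4.
    apply: uniq_leq_size; first by rewrite filter_uniq // Lc_uniq.
    move=> x; rewrite mem_filter => /andP [/andP [hs /eqP hm] hx].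
    rewrite mem_filter hs hx /=.
    exact: dec4 hu hm hx.
  apply: (leq_trans le1).
  rewrite /L4 size_filter /= (sv_shift e f u c 1) (sv_shift e f u c 2) (sv_shift e f u c 3).
  have e0 : sv e f c = sv e f (c %% 6 + 0) by rewrite -(sv_shift e f u c 0) mul0n addn0.
  rewrite e0 (proj1 (sv_far e f u)) (proj2 (sv_far e f u)).
  have m0 : c + 0 * (6 * u + 1) \in Lc u by exact: mem_small.
  have m1 : c + 1 * (6 * u + 1) \in Lc u by exact: mem_small.
  rewrite mul0n addn0 in m0.
  rewrite m0 m1 addn0 andbT andbT.
  have := fin_check e f (c %% 6) (c + 2 * (6 * u + 1) \in Lc u) (c + 3 * (6 * u + 1) \in Lc u) he hf
     (ltn_pmod c (isT : 0 < 6)) (@mem2 u c hc) (@mem3 u c hu hc).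
  rewrite addn0 !(andbC _ (_ \in _)).
  by rewrite !addnA.
move: A S K; set C1 := count _ _; set C2 := count _ _; set C3 := count _ _; set X8 := nat_of_bool _; set X9 := nat_of_bool _. lia.
Qed.

Lemma prod_dvd_exists (p : nat -> nat) k x : (forall j, j < k -> prime (p j)) ->
  ~~ coprime x (\prod_(j < k) p j) -> exists j : 'I_k, p j %| x.
Proof.
elim: k => [|k IH] hp.
  by rewrite big_ord0 coprimen1.
rewrite big_ord_recr /= coprimeMr negb_and => /orP [h|h].
  have [j hj] := IH (fun j hj => hp j (ltnW hj)) h.
  by exists (widen_ord (leqnSn k) j).
exists ord_max => /=.
move: h; rewrite coprime_sym prime_coprime ?negbK //; exact: hp.
Qed.

Lemma dvd_close p V a b : p %| V - a -> p %| V - b -> a <= V -> b <= V ->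
  a < p -> b < p -> a = b.
Proof.
move=> ha hb aV bV ap bp.
wlog ab : a b ha hb aV bV ap bp / a <= b.
  move=> W; case: (leqP a b) => h; first exact: W.
  apply/esym; apply: W => //; exact: ltnW.
have : p %| (V - a) - (V - b) by apply: dvdn_sub.
have -> : (V - a) - (V - b) = b - a by lia.
case: (posnP (b - a)) => h; first by lia.
move=> /(dvdn_leq h) => hle; lia.
Qed.

Lemma not_dvd_mod d V s : s <= V -> V %% d != s %% d -> ~~ (d %| V - s).
Proof. by move=> sV h; rewrite -eqn_mod_dvd. Qed.

Lemma dom_core (u k V : nat) (p : nat -> nat) :
  1 <= u -> k = 4 * u -> prime (6 * u + 1) ->
  (forall j, j < k -> prime (p j)) -> (forall j, j < k -> 12 * u + 9 < p j) ->
  12 * u + 9 <= V ->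
  has (fun s => coprime (V - s) (6 * (6 * u + 1) * \prod_(j < k) p j)) (Lc u).
Proof.
move=> hu hk hq hp hpb hV.
apply/negPn/negP; rewrite -all_predC => /allP H.
set q := 6 * u + 1.
set T := [seq s <- Lc u | sv (V %% 2) (V %% 3) s && (s %% q != V %% q)].
have hT : 4 * u + 1 <= size T.
  rewrite size_filter; apply: count_main => //; apply: ltn_pmod => //.
  by rewrite /q addn1.
have sle : forall s, s \in Lc u -> s <= 12 * u + 9.
  by move=> s; rewrite mem_Lc => /orP [/orP [|/eqP ->]|/eqP ->]; lia.
have hex : forall s, s \in T -> exists j : 'I_k, p j %| V - s.
  move=> s; rewrite mem_filter => /andP [/andP [hs hsq] hL].
  have sV : s <= V by apply: leq_trans (sle _ hL) hV.
  move: hs; rewrite /sv => /andP [h2 h3].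
  have n2 : ~~ (2 %| V - s) by rewrite -eqn_mod_dvd // eq_sym.
  have n3 : ~~ (3 %| V - s) by rewrite -eqn_mod_dvd // eq_sym.
  have nq : ~~ (q %| V - s) by rewrite -eqn_mod_dvd // eq_sym.
  apply: (@prod_dvd_exists p k (V - s) hp).
  have := H s hL; rewrite /= coprimeMr coprimeMr.
  rewrite (_ : 6 = 2 * 3) // coprimeMr.
  have c2 : coprime (V - s) 2 by rewrite coprime_sym prime_coprime.
  have c3 : coprime (V - s) 3 by rewrite coprime_sym prime_coprime.
  have cq : coprime (V - s) q by rewrite coprime_sym prime_coprime.
  by rewrite c2 c3 cq.
have kpos : 0 < k by rewrite hk; lia.
pose j0 : 'I_k := Ordinal kpos.
pose g x := odflt j0 [pick j : 'I_k | p j %| V - x].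
have gP : forall s, s \in T -> p (g s) %| V - s.
  move=> s /hex [j hj]; rewrite /g; case: pickP => [j' //|/(_ j)]; by rewrite hj.
have ginj : {in T &, injective g}.
  move=> s1 s2 h1 h2 E.
  have L1 : s1 \in Lc u by move: h1; rewrite mem_filter => /andP [].
  have L2 : s2 \in Lc u by move: h2; rewrite mem_filter => /andP [].
  apply: (@dvd_close (p (g s1)) V) => //.
  - by apply: gP.
  - by rewrite E; apply: gP.
  - exact: leq_trans (sle _ L1) hV.
  - exact: leq_trans (sle _ L2) hV.
  - exact: leq_ltn_trans (sle _ L1) (hpb _ (ltn_ord _)).
  - exact: leq_ltn_trans (sle _ L2) (hpb _ (ltn_ord _)).
have hu2 : uniq (map g T) by rewrite map_inj_in_uniq // filter_uniq // Lc_uniq.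
have : size (map g T) <= size (enum 'I_k).
  by apply: uniq_leq_size => // x _; rewrite mem_enum.
rewrite size_map size_enum_ord => hs.
move: (leq_trans hT hs); rewrite hk; lia.
Qed.

Lemma coprime_prod_l (m : nat -> nat) N y :
  (forall i, i < N -> coprime (m i) y) -> coprime (\prod_(i < N) m i) y.
Proof.
move=> h; apply: (big_ind (fun z => coprime z y)) => //.
- exact: coprime1n.
- by move=> a b ha hb; rewrite coprimeMl ha hb.
- by move=> i _; apply: h.
Qed.

Lemma dvd_prod_ord (m : nat -> nat) N (j : 'I_N) : m j %| \prod_(i < N) m i.
Proof. by rewrite (bigD1 j) //= dvdn_mulr. Qed.

Lemma crt N (m r : nat -> nat) :
  (forall i j, i < j -> j < N -> coprime (m i) (m j)) ->
  exists x, forall i, i < N -> x = r i %[mod m i].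
Proof.
elim: N => [|N IH] hc; first by exists 0.
have [x hx] := IH (fun i j hij hj => hc i j hij (ltnW hj)).
set M := \prod_(i < N) m i.
have cM : coprime M (m N) by apply: coprime_prod_l => i hi; apply: hc.
exists (chinese M (m N) x (r N)) => i; rewrite ltnS leq_eqVlt => /orP [/eqP ->|hi].
  exact: chinese_modr.
have d : m i %| M by exact: (@dvd_prod_ord m N (Ordinal hi)).
rewrite -(modn_dvdm _ d) chinese_modl // (modn_dvdm _ d).
exact: hx.
Qed.

Lemma dvd_shift m x r i : x = r %[mod m] -> m %| r + i -> m %| x + i.
Proof. by move=> hx; rewrite /dvdn -(modnDml x) hx modnDml. Qed.

Lemma noncop d a n : 1 < d -> d %| a -> d %| n -> ~~ coprime a n.
Proof.
move=> hd da dn; apply/negP => c.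
have := coprime_dvdr dn (coprime_dvdl da c).
by rewrite /coprime gcdnn => /eqP E; rewrite E in hd.
Qed.

Definition pos (j : nat) := 3 * j + 5 + j %% 2.

Lemma coprime_primes a b : prime a -> prime b -> a != b -> coprime a b.
Proof. by move=> pa pb ab; rewrite prime_coprime // dvdn_prime2. Qed.

Lemma cover (u k n : nat) (p : nat -> nat) :
  1 <= u -> k = 4 * u -> prime (6 * u + 1) ->
  (forall j, j < k -> prime (p j)) -> (forall j, j < k -> 12 * u + 12 < p j) ->
  (forall i j, i < j -> j < k -> p i < p j) ->
  n = 6 * (6 * u + 1) * \prod_(j < k) p j ->
  exists x, forall i, i < 12 * u + 9 -> ~~ coprime (x + i) n.
Proof.
move=> hu hk hq hp hpb hinc hn.
set q := 6 * u + 1.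
pose mm i := if i == 0 then 6 else if i == 1 then q else p (i - 2).
pose rr i := if i == 0 then 2 else if i == 1 then q - 3 else p (i - 2) - pos (i - 2).
have mmP : forall i, 0 < i -> i < k + 2 -> prime (mm i) /\ 6 < mm i.
  move=> i hi1 hi2; rewrite /mm; case: ifP => [/eqP E|_]; first by rewrite E in hi1.
  case: ifP => [_|/negbT h1]; first by split => //; rewrite /q; move: hu; clear; lia.
  have hj : i - 2 < k by move: hi2 hi1 h1; clear; lia.
  split; [exact: hp | have := hpb _ hj; clear; lia].
have hcop : forall i j, i < j -> j < k + 2 -> coprime (mm i) (mm j).
  move=> i j hij hj.
  have [pj gj] := mmP j (leq_ltn_trans (leq0n i) hij) hj.
  case: (posnP i) => [i0|ipos].
    rewrite i0 (_ : mm 0 = 6) // coprime_sym prime_coprime //; apply/negP => /(dvdn_leq (isT : 0 < 6)) h; move: gj h; clear; lia.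
  have [pii gi] := mmP i ipos (ltn_trans hij hj).
  apply: coprime_primes => //.
  rewrite /mm; have -> : (j == 0) = false by apply/negbTE; lia.
  have -> : (i == 0) = false by apply/negbTE; lia.
  have -> : (j == 1) = false by apply/negbTE; lia.
  have hj2 : j - 2 < k by lia.
  case: ifP => [_|/negbT hi1].
    have := hpb _ hj2; rewrite /q => h; apply/negP => /eqP E; lia.
  have := hinc (i - 2) (j - 2) ltac:(lia) hj2; lia.
have [x hx] := @crt (k + 2) mm rr hcop.
have hx0 : x %% 6 = 2 by have := hx 0 ltac:(by rewrite addn2).
have hx1 : x = q - 3 %[mod q] by have := hx 1 ltac:(by rewrite addn2).
have hxj : forall j, j < k -> x = p j - pos j %[mod p j].
  move=> j hj; have := hx (j + 2) ltac:(by rewrite ltn_add2r).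
  by rewrite /mm /rr addn2 /= subn2.
have d6 : 6 %| n by rewrite hn -mulnA dvdn_mulr.
have dq : q %| n by rewrite hn dvdn_mulr // dvdn_mull.
exists x => i hi.
have [hA|hA] := boolP (i %% 2 == 0).
  apply: (@noncop 2) => //; last exact: dvdn_trans _ d6.
  move: hx0 hA; clear; lia.
have [hB|hB] := boolP (i %% 3 == 1).
  apply: (@noncop 3) => //; last exact: dvdn_trans _ d6.
  move: hx0 hB; clear; lia.
have [hC|hC] := boolP ((i == 3) || (i == 12 * u + 5)).
  apply: (@noncop q) => //; first by rewrite /q; lia.
  apply: (@dvd_shift q x (q - 3) i hx1).
  case/orP: hC => /eqP ->.
    by rewrite subnK ?dvdnn // /q; lia.
  have -> : q - 3 + (12 * u + 5) = 3 * q by rewrite /q; lia.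
  exact: dvdn_mull.
set j := (i - 5) %/ 3.
have hj : j < k by move: hA hB hC hi hk; rewrite /j; clear; lia.
have hpj : pos j = i by move: hA hB hC hi hk; rewrite /j /pos; clear; lia.
have posle : pos j <= p j by have := hpb _ hj; move: hi; rewrite hpj; lia.
apply: (@noncop (p j)) => //.
- by apply: prime_gt1; apply: hp.
- apply: (@dvd_shift (p j) x (p j - pos j) i (hxj j hj)).
  by rewrite -hpj subnK.
- rewrite hn dvdn_mull //.
  exact: (@dvd_prod_ord p k (Ordinal hj)).
Qed.

Lemma path_iota (e : rel nat) x m : (forall y, x <= y -> y < x + m -> e y y.+1) ->
  path e x (iota x.+1 m).
Proof.
elim: m x => [|m IH] x h //=.
rewrite h ?leqnn ?addnS ?ltnS ?leq_addr //=.
apply: IH => y h1 h2; apply: h; [exact: ltnW | by rewrite addnS].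
Qed.

Lemma last_iota' x m : last x (iota x.+1 m) = x + m.
Proof. by elim: m x => [|m IH] x /=; [rewrite addn0 | rewrite IH addnS]. Qed.

Definition Lcyc u := 0 :: (iota 1 (12 * u + 3) ++ [:: 12 * u + 8; 12 * u + 9; 12 * u + 4; 12 * u + 5]).

Lemma mem_Lcyc u x : (x \in Lcyc u) = (x < 12 * u + 6) || (x == 12 * u + 8) || (x == 12 * u + 9).
Proof.
rewrite /Lcyc in_cons mem_cat mem_iota !inE.
apply/idP/idP => h; lia.
Qed.

Lemma Lcyc_uniq u : uniq (Lcyc u).
Proof.
rewrite /Lcyc cons_uniq mem_cat mem_iota !inE cat_uniq iota_uniq /= !mem_iota !inE.
have h : forall b : bool, b = false -> ~~ b by move=> b ->.
rewrite !h //; lia.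
Qed.

Lemma size_Lcyc u : size (Lcyc u) = 12 * u + 8.
Proof. by rewrite /Lcyc /= size_cat size_iota /=; lia. Qed.

Lemma cop_d (u k n d : nat) (p : nat -> nat) :
  (forall j, j < k -> prime (p j)) -> (forall j, j < k -> 12 * u + 12 < p j) ->
  prime (6 * u + 1) -> n = 6 * (6 * u + 1) * \prod_(j < k) p j ->
  0 < d -> d < 12 * u + 12 -> ~~ (2 %| d) -> ~~ (3 %| d) -> ~~ (6 * u + 1 %| d) ->
  coprime d n.
Proof.
move=> hp hpb hq hn d0 dlt n2 n3 nq.
have c6 : coprime d 6.
  rewrite (_ : 6 = 2 * 3) // coprimeMr !(coprime_sym d) !prime_coprime //.
  by rewrite n2 n3.
have cq : coprime d (6 * u + 1) by rewrite coprime_sym prime_coprime.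
rewrite hn coprimeMr coprimeMr c6 cq /= coprime_sym.
apply: coprime_prod_l => j hj.
rewrite prime_coprime; last exact: hp.
apply/negP => /(dvdn_leq d0) h; have := hpb j hj; lia.
Qed.

Lemma cycle_part (u k n : nat) (p : nat -> nat) :
  1 <= u -> k = 4 * u -> prime (6 * u + 1) ->
  (forall j, j < k -> prime (p j)) -> (forall j, j < k -> 12 * u + 12 < p j) ->
  n = 6 * (6 * u + 1) * \prod_(j < k) p j ->
  exists s : seq 'I_n, dominating_cycle (@Xadj n) s /\ size s = 12 * u + 8.
Proof.
move=> hu hk hq hp hpb hn.
have P0 : 0 < \prod_(j < k) p j.
  by apply: prodn_gt0 => i; apply: prime_gt0; apply: hp.
have nbig : 12 * u + 10 <= n.
  rewrite hn; apply: leq_trans (leq_pmulr _ P0); lia.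
have n0 : 0 < n by move: nbig; clear; lia.
pose o0 : 'I_n := Ordinal n0.
pose toI (x : nat) : 'I_n := insubd o0 x.
have toIK : forall x, x < n -> val (toI x) = x by move=> x hx; rewrite val_insubd hx.
have Lsmall : forall x, x \in Lcyc u -> x < n.
  by move=> x; rewrite mem_Lcyc => h; apply: leq_trans _ nbig; lia.
have copd := @cop_d u k n _ p hp hpb hq hn.
have edge : forall a b, a < n -> b < n -> coprime `|(Posz a - Posz b)%R| n ->
    relpre toI (@Xadj n) a b.
  by move=> a b ha hb h; rewrite /= /Xadj toIK // toIK // coprimezE.
exists (map toI (Lcyc u)); split; last by rewrite size_map size_Lcyc.
split; [split; [|split]|].
- by rewrite size_map size_Lcyc; lia.
- rewrite map_inj_in_uniq ?Lcyc_uniq // => a b ha hb E.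
  by rewrite -(toIK a (Lsmall _ ha)) -(toIK b (Lsmall _ hb)) E.
- rewrite cycle_map /Lcyc /= rcons_cat cat_path.
  apply/andP; split.
    apply: path_iota => y h1 h2; apply: edge; try (apply: leq_trans _ nbig; lia).
    by rewrite distnEr // subSnn coprime1n.
  rewrite last_iota' add0n /=.
  have c1 : coprime 1 n by exact: coprime1n.
  have c5 : coprime 5 n by apply: copd => //; try lia; apply/negP => /(dvdn_leq (isT : 0 < 5)); lia.
  have cL : coprime (12 * u + 5) n.
    apply: copd; try lia.
    apply/negP => h.
    have e : 12 * u + 5 = 2 * (6 * u + 1) + 3 by lia.
    move: h; rewrite e dvdn_addr; last by rewrite dvdn_mull.
    by move/(dvdn_leq (isT : 0 < 3)); lia.
  have lt : forall x, x <= 12 * u + 9 -> x < n by move=> x hx; apply: leq_trans _ nbig; lia.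
  have ed : forall a b, a <= 12 * u + 9 -> b <= 12 * u + 9 ->
      coprime `|(Posz a - Posz b)%R| n -> Xadj (toI a) (toI b).
    by move=> a b ha hb h; apply: edge => //; apply: lt.
  rewrite andbT; apply/and5P; split; apply: ed; rewrite ?leq_add2l //.
  + by rewrite distnEr ?leq_add2l // subnDl.
  + by rewrite distnEr ?leq_add2l // subnDl.
  + by rewrite distnEl ?leq_add2l // subnDl.
  + by rewrite distnEr ?leq_add2l // subnDl.
  + by rewrite distnEl ?subn0.
- move=> v; right.
  have hpb' : forall j, j < k -> 12 * u + 9 < p j.
    by move=> j hj; have := hpb j hj; clear; lia.
  have hV : 12 * u + 9 <= v + n by apply: leq_trans _ (leq_addl _ _); apply: leq_trans _ nbig; rewrite leq_add2l.
  have := @dom_core u k (v + n) p hu hk hq hp hpb' hV.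
  rewrite -hn => /hasP [x hx hc].
  exists (toI x).
    by apply: map_f; rewrite mem_Lcyc -mem_Lc.
  have xn : x < n.
    by apply: Lsmall; rewrite mem_Lcyc -mem_Lc.
  rewrite /Xadj toIK // Xadj_nat //.
Qed.


Lemma gamma_bounds (T : finType) (e : rel T) (s : seq T) m :
  dominating_cycle e s -> size s = m -> gamma_t e <= gamma_c e /\ gamma_c e <= m.
Proof.
move=> hd hs; split; last first.
  by apply: least_le; exists s.
have [[s0 [[[h3 [hu hc]] hdom] hs0]] _] := @least_spec
   (fun m => exists s : seq T, dominating_cycle e s /\ size s = m) (ex_intro _ m (ex_intro _ s (conj hd hs))).
rewrite /gamma_c -hs0.
apply: least_le; exists [set x in s0]; split.
  move=> v; case: (hdom v) => [hv|[w hw hvw]].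
    by exists (next s0 v); rewrite ?inE ?mem_next //; apply: next_cycle.
  by exists w; rewrite ?inE.
by rewrite cardsE; apply/card_uniqP.
Qed.

Theorem mainTheorem2 (q : nat) (p : nat -> nat) :
  prime q -> q = 1 %[mod 3] ->
  (forall j, j < (2 * q - 2) %/ 3 -> prime (p j)) ->
  (forall i j, i < j -> j < (2 * q - 2) %/ 3 -> p i < p j) ->
  2 * q + 10 < p 0 ->
  let n := 6 * q * \prod_(j < (2 * q - 2) %/ 3) p j in
  2 * q + 8 <= jacobsthal n /\
  (exists s : seq 'I_n, dominating_cycle (@Xadj n) s /\ size s = 2 * q + 6) /\
  gamma_t (@Xadj n) <= gamma_c (@Xadj n) /\
  gamma_c (@Xadj n) <= 2 * q + 6 /\
  2 * q + 6 <= jacobsthal n - 2.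
Proof.
move=> hq hq3 hp hinc hp0 n.
have q1 : 1 < q by apply: prime_gt1.
have hodd : q %% 2 = 1.
  case: (even_prime hq) => [E|]; first by rewrite E in hq3.
  by rewrite modn2 => ->.
have [u qu hu] : exists2 u, q = 6 * u + 1 & 1 <= u.
  exists (q %/ 6); move: hodd hq3 q1; clear; lia.
set k := (2 * q - 2) %/ 3.
have hk : k = 4 * u by rewrite /k qu; clear; lia.
have hq' : prime (6 * u + 1) by rewrite -qu.
have hpb : forall j, j < k -> 12 * u + 12 < p j.
  move=> j hj; case: (posnP j) => [->|j0]; first by move: hp0; rewrite qu; clear; lia.
  have := hinc 0 j j0 hj; move: hp0; rewrite qu; clear; lia.
have hn : n = 6 * (6 * u + 1) * \prod_(j < k) p j by rewrite /n -qu.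
have [s [hs1 hs2]] := @cycle_part u k n p hu hk hq' hp hpb hn.
have P0 : 0 < \prod_(j < k) p j.
  by apply: prodn_gt0 => i; apply: prime_gt0; apply: hp.
have n0 : 0 < n by rewrite /n !muln_gt0 P0 andbT; move: q1; clear; lia.
have hJ : 2 * q + 7 < jacobsthal n.
  apply: jac_lb => //.
  have [x hx] := @cover u k n p hu hk hq' hp hpb (fun i j => hinc i j) hn.
  by exists x; rewrite qu (_ : 2 * (6 * u + 1) + 7 = 12 * u + 9) //; clear; lia.
have hsz : size s = 2 * q + 6 by rewrite hs2 qu; clear; lia.
have [g1 g2] := @gamma_bounds _ (@Xadj n) s _ hs1 hsz.
split; first by move: hJ; clear; lia.
split; first by exists s.
split; first exact: g1.
split; first exact: g2.
move: hJ; clear; lia.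
Qed.
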